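(* Let $X$ be a metric space with $\operatorname{cdim}X\le n$. Then there are constants $c_0>0$, $\delta>0$ and $r_0>0$ such that for every $r\in(0,r_0)$ there exists a sequence of open coverings $\mathcal U_j$, $j\in\mathbb N$, of $X$ with: (i) there is one color set $A$ with $|A|=n+1$ such that for each $j$, $\mathcal U_j=\bigcup_{a\in A}\mathcal U_j^a$ where each $\mathcal U_j^a$ consists of pairwise disjoint sets; (ii) for every $j$, $\delta r^j\le\operatorname{mesh}(\mathcal U_j)\le r^j$ and $L(\mathcal U_j)\ge c_0\operatorname{mesh}(\mathcal U_j)$; (iii) for every $i>j$, $\mathcal U_i$ is inscribed in $\mathcal U_j$; (iv) for every $a\in A$ the union $\mathcal U^a=\bigcup_{j\in\mathbb N}\mathcal U_j^a$ is separated.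
   Context: A covering $\mathcal U'$ is inscribed in $\mathcal U$ if every member of $\mathcal U'$ is contained in some member of $\mathcal U$. A family is separated if any two different members are either disjoint or one contains the other. Capacity dimension: for an open covering $\mathcal U$ of a metric space $Z$ let $\operatorname{mesh}(\mathcal U,z)=\sup\{\operatorname{diam}U:z\in U\in\mathcal U\}$, $\operatorname{mesh}(\mathcal U)=\sup_U\operatorname{diam}U$, $L(\mathcal U,z)=\min\{\sup_{U\in\mathcal U}\operatorname{dist}(z,Z\setminus U),\operatorname{mesh}(\mathcal U,z)\}$, $L(\mathcal U)=\inf_zL(\mathcal U,z)$, $\operatorname{cap}(\mathcal U)=L(\mathcal U)/\operatorname{mesh}(\mathcal U)$ (set to $1$ if $\operatorname{mesh}=0$ or $L=\operatorname{mesh}=\infty$). A covering is $(m+1)$-colored if it is a union of $m+1$ subfamilies each of pairwise disjoint sets. For $\tau>0$, $\delta\in(0,1)$, integer $m\ge0$, $c_\tau(Z,m,\delta)$ is the supremum (0 if empty) of $\operatorname{cap}(\mathcal U)$ over open $(m+1)$-colored coverings with $\delta\tau\le\operatorname{mesh}(\mathcal U)\le\tau$; $c(Z,m,\delta)=\liminf_{\tau\to0}c_\tau(Z,m,\delta)$; $c(Z,m)=\lim_{\delta\to0}c(Z,m,\delta)$; $\operatorname{cdim}Z=\inf\{m:c(Z,m)>0\}$. *)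

(* Defs.v *)
(* metric given by an explicit distance d : T -> T -> R,
   R : realType; extended reals \bar R for sup/inf (diam, mesh, dist may be +oo). *)
From HB Require Import structures.
From mathcomp Require Import all_boot all_order all_algebra.
From mathcomp Require Import all_classical all_reals all_analysis.
Set Implicit Arguments. Unset Strict Implicit. Unset Printing Implicit Defensive.
Import Order.TTheory GRing.Theory Num.Theory.
Local Open Scope classical_set_scope.
Local Open Scope ring_scope.

Section CapDim.
Variables (R : realType) (T : Type) (d : T -> T -> R).

Definition is_metric : Prop :=
  (forall x y, 0 <= d x y) /\ (forall x y, d x y = 0 <-> x = y) /\
  (forall x y, d x y = d y x) /\ (forall x y z, d x z <= d x y + d y z).

Definition mopen (U : set T) : Prop :=
  forall x, U x -> exists2 e : R, 0 < e & forall y, d x y < e -> U y.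

Definition covering (UU : set (set T)) : Prop := forall x : T, exists2 U, UU U & U x.
Definition open_covering (UU : set (set T)) : Prop :=
  covering UU /\ forall U, UU U -> mopen U.

Definition inscribed_in (UU' UU : set (set T)) : Prop :=
  forall U', UU' U' -> exists2 U, UU U & U' `<=` U.

Definition pairwise_disjoint (UU : set (set T)) : Prop :=
  forall U V, UU U -> UU V -> U <> V -> U `&` V = set0.

Definition separated_family (UU : set (set T)) : Prop :=
  forall U V, UU U -> UU V -> U <> V -> U `&` V = set0 \/ U `<=` V \/ V `<=` U.

Definition colored (k : nat) (UU : set (set T)) : Prop :=
  exists F : 'I_k -> set (set T), UU = \bigcup_i F i /\ forall i, pairwise_disjoint (F i).

Local Open Scope ereal_scope.

(* diameter (0 for the empty set) *)
Definition diam (U : set T) : \bar R :=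
  ereal_sup ([set 0] `|` [set z | exists x y, U x /\ U y /\ z = (d x y)%:E]).

Definition mesh_at (UU : set (set T)) (z : T) : \bar R :=
  ereal_sup (diam @` [set U | UU U /\ U z]).

Definition mesh (UU : set (set T)) : \bar R :=
  ereal_sup ([set 0] `|` diam @` UU).

(* dist(z, A) ; = +oo when A is empty *)
Definition dist_to (z : T) (A : set T) : \bar R :=
  ereal_inf [set (d z y)%:E | y in A].

Definition L_at (UU : set (set T)) (z : T) : \bar R :=
  Order.min (ereal_sup [set dist_to z (~` U) | U in UU]) (mesh_at UU z).

Definition L (UU : set (set T)) : \bar R := ereal_inf (range (L_at UU)).

(* capacity: L/mesh, = 1 if mesh = 0 or L = mesh = +oo, L/+oo = 0 otherwise *)
Definition cap (UU : set (set T)) : \bar R :=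
  if (mesh UU == 0) || ((L UU == +oo) && (mesh UU == +oo)) then 1
  else if mesh UU == +oo then 0
  else ((fine (L UU)) / (fine (mesh UU)))%:E.

Definition c_tau (m : nat) (delta tau : R) : \bar R :=
  ereal_sup ([set 0] `|` [set cap UU | UU in
     [set UU | open_covering UU /\ colored m.+1 UU /\
               ((delta * tau)%:E <= mesh UU) /\ (mesh UU <= tau%:E)]]).

(* c(Z, m, delta) = liminf_{tau -> 0+} c_tau(Z, m, delta) *)
Definition c_delta (m : nat) (delta : R) : \bar R :=
  ereal_sup [set ereal_inf [set c_tau m delta t | t in [set t : R | (0 < t < e)%R]]
            | e in [set e : R | (0 < e)%R]].

Definition c_m (m : nat) : \bar R := lim (c_delta m delta @[delta --> 0%R^'+]).

(* cdim Z <= n, where cdim Z = inf {m | c(Z,m) > 0} (inf of the empty set = oo) *)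
Definition cdim_le (n : nat) : Prop := exists m : nat, (m <= n)%N /\ 0 < c_m m.

End CapDim.

(* Main.v *)
Require Import Defs.
From HB Require Import structures.
From mathcomp Require Import all_boot all_order all_algebra.
From mathcomp Require Import all_classical all_reals all_analysis.
From mathcomp Require Import lra ring.
Import Order.TTheory GRing.Theory Num.Theory.
Set Implicit Arguments. Unset Strict Implicit. Unset Printing Implicit Defensive.
Local Open Scope classical_set_scope.
Local Open Scope ring_scope.

Section Chain.
Variables (R : realType) (T : Type) (d : T -> T -> R).
Hypothesis dxx : forall x, d x x = 0.
Hypothesis dsym : forall x y, d x y = d y x.
Hypothesis dtri : forall x y z, d x z <= d x y + d y z.
Variable r : R.
Hypothesis r0 : 0 <= r.
Hypothesis r14 : r <= 1/4.
Variable Bas : nat -> set T -> Prop.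
Hypothesis Hdiam : forall k B x y, Bas k B -> B x -> B y -> d x y <= r ^+ k / 2.
Hypothesis Hgap : forall k B B' x y, Bas k B -> Bas k B' -> B <> B' -> B x -> B' y ->
  r ^+ k.+1 < d x y.

Definition node := (nat * set T)%type.
Definition Step (k : nat) (X Y : node) : Prop :=
  [/\ (k <= X.1)%N, (k <= Y.1)%N, Bas X.1 X.2, Bas Y.1 Y.2 & exists z, X.2 z /\ Y.2 z].

Inductive pth (k : nat) : nat -> node -> node -> Prop :=
| pth0 X : pth k 0 X X
| pthS n X Y Z : Step k X Y -> pth k n Y Z -> pth k n.+1 X Z.

Lemma Step_sym k X Y : Step k X Y -> Step k Y X.
Proof. by case=> h1 h2 h3 h4 [z [z1 z2]]; split => //; exists z. Qed.

Lemma pth_cat k n1 n2 X Y Z : pth k n1 X Y -> pth k n2 Y Z -> pth k (n1 + n2) X Z.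
Proof.
elim=> [X' //|n X' Y' Z' s _ IH] h; rewrite addSn; exact: pthS s (IH h).
Qed.

Lemma pth_rev k n X Y : pth k n X Y -> pth k n Y X.
Proof.
elim=> [X'|n0 X' Y' Z' s _ IH]; first exact: pth0.
rewrite -addn1; apply: pth_cat IH _; apply: pthS (Step_sym s) (pth0 _ _).
Qed.

Lemma pth_lev k n X Y : pth k n X Y -> (k <= X.1)%N -> (k <= Y.1)%N.
Proof. by elim=> // n' X' Y' Z' [] _ h _ _ _ _ IH _; exact: IH. Qed.

Lemma pth_bas k n X Y : pth k n X Y -> Bas X.1 X.2 -> Bas Y.1 Y.2.
Proof. by elim=> // n' X' Y' Z' [] _ _ _ h _ _ IH _; exact: IH. Qed.

Lemma pth_mono k k' n X Y : (k' <= k)%N -> pth k n X Y -> pth k' n X Y.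
Proof.
move=> hk; elim=> [X'|n' X' Y' Z' [] h1 h2 h3 h4 h5 _ IH]; first exact: pth0.
apply: pthS IH; split => //; exact: leq_trans hk _.
Qed.

Lemma pth_split k n X Y : pth k n X Y -> (k <= X.1)%N ->
  (exists Z n1 n2, [/\ n = (n1 + n2)%N, pth k n1 X Z, pth k n2 Z Y & Z.1 = k])
  \/ (pth k.+1 n X Y /\ (k < X.1)%N).
Proof.
elim=> [X'|n' X' Y' Z' s p IH] hX.
  case: (ltnP k X'.1) => h; first by right; split => //; exact: pth0.
  left; exists X', 0%N, 0%N; split => //; [exact: pth0 | exact: pth0 | by apply/eqP; rewrite eqn_leq h hX].
case: (ltnP k X'.1) => h; last first.
  left; exists X', 0%N, n'.+1; split => //; first exact: pth0.
    exact: pthS s p.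
  by apply/eqP; rewrite eqn_leq h hX.
have := s => -[_ hY _ _ _].
case: (IH hY) => [[Z [n1 [n2 [-> p1 p2 hZ]]]]|[p' hY']].
  by left; exists Z, n1.+1, n2; split => //; exact: pthS s p1.
right; split => //; apply: pthS p'; case: s => h1 h2 h3 h4 h5; split => //.
Qed.

Lemma pth_min i k n X Y : X.1 = (k + i)%N -> pth k n X Y ->
  exists m Z n1 n2, [/\ (k <= m)%N, n = (n1 + n2)%N, pth m n1 X Z, pth m n2 Z Y & Z.1 = m].
Proof.
elim: i k => [|i IH] k hX p.
  case: (pth_split p _); first by rewrite hX addn0.
    by move=> [Z [n1 [n2 [h1 h2 h3 h4]]]]; exists k, Z, n1, n2.
  by move=> [_]; rewrite hX addn0 ltnn.
case: (pth_split p _); first by rewrite hX leq_addr.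
  by move=> [Z [n1 [n2 [h1 h2 h3 h4]]]]; exists k, Z, n1, n2.
move=> [p' _]; have hX' : X.1 = (k.+1 + i)%N by rewrite hX addnS addSn.
have [m [Z [n1 [n2 [h1 h2 h3 h4 h5]]]]] := IH k.+1 hX' p'.
exists m, Z, n1, n2; split => //; exact: ltnW.
Qed.

Definition Qs (n : nat) := forall k X Y, pth k n X Y -> Bas X.1 X.2 -> X.1 = k ->
  (forall y, Y.2 y -> exists2 x, X.2 x & d x y <= r ^+ k.+1) /\ (Y.1 = k -> Y.2 = X.2).
Definition Ps (n : nat) := forall k X Y, pth k n X Y -> Bas X.1 X.2 -> (k <= X.1)%N ->
  forall x y, X.2 x -> Y.2 y -> d x y <= r ^+ k.

Lemma rpow_ge0 k : 0 <= r ^+ k. Proof. exact: exprn_ge0. Qed.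

Lemma P_of_Q n : (forall n', (n' <= n)%N -> Qs n') -> Ps n.
Proof.
move=> HQ k X Y p bX kX x y Xx Yy.
have [m [Z [n1 [n2 [km hn p1 p2 hZ]]]]] := pth_min (esym (subnKC kX)) p.
have bZ := pth_bas p1 bX.
have l1 : (n1 <= n)%N by rewrite hn leq_addr.
have l2 : (n2 <= n)%N by rewrite hn leq_addl.
have [hq1 _] := HQ n1 l1 m Z X (pth_rev p1) bZ hZ.
have [hq2 _] := HQ n2 l2 m Z Y p2 bZ hZ.
have [z1 Zz1 d1] := hq1 x Xx; have [z2 Zz2 d2] := hq2 y Yy.
have d3 := Hdiam bZ Zz1 Zz2. rewrite hZ in d3.
have e1 : d x y <= d x z1 + d z1 z2 + d z2 y.
  apply: le_trans (dtri x z1 y) _; rewrite -addrA lerD2l; exact: dtri.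
have r1 : r <= 1.
  have h14 := r14; lra.
have hm : r ^+ m <= r ^+ k by exact: (ler_wiXn2l r0 r1 km).
have hp := rpow_ge0 m.
rewrite exprS in d1 d2.
rewrite dsym in d1.
have h14 := r14; have h0 := r0.
have : r * r ^+ m <= r ^+ m / 4 by nra.
lra.
Qed.

Lemma Q_step n : (forall n', (n' < n)%N -> Qs n' /\ Ps n') -> Qs n.
Proof.
move=> HI k X Y p bX hX.
case: p HI bX hX => [X' | n' X' Y' Z' s p] HI bX hX.
  split => // y Xy; exists y => //; rewrite dxx; exact: rpow_ge0.
have [_ kY bX' bY [w [Xw Yw]]] := s.
case: (eqVneq Y'.1 k) => hY.
  have e : Y'.2 = X'.2.
    apply: contrapT => ne.
    have bY2 : Bas k Y'.2 by rewrite -hY.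
    have bX2 : Bas k X'.2 by rewrite -hX.
    have := Hgap bY2 bX2 ne Yw Xw.
    by rewrite dxx ltNge rpow_ge0.
  have [Q1 _] := HI n' (ltnSn _).
  by have := Q1 k Y' Z' p bY hY; rewrite e.
have kY' : (k < Y'.1)%N by rewrite ltn_neqAle eq_sym hY kY.
case: (pth_split p kY) => [[Z [n1 [n2 [hn p1 p2 hZ]]]]|[p' _]].
  have bZ := pth_bas p1 bY.
  have l1 : (n1 < n'.+1)%N by rewrite ltnS hn leq_addr.
  have [Q1 _] := HI n1 l1.
  have [q1 _] := Q1 k Z Y' (pth_rev p1) bZ hZ.
  have [z Zz dz] := q1 w Yw.
  have e : Z.2 = X'.2.
    apply: contrapT => ne.
    have bZ2 : Bas k Z.2 by rewrite -hZ.
    have bX2 : Bas k X'.2 by rewrite -hX.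
    have := Hgap bZ2 bX2 ne Zz Xw.
    by rewrite ltNge dz.
  have l2 : (n2 < n'.+1)%N by rewrite ltnS hn leq_addl.
  have [Q2 _] := HI n2 l2.
  by have := Q2 k Z Z' p2 bZ hZ; rewrite e.
have [_ P1] := HI n' (ltnSn _).
split.
  move=> y Zy; exists w => //; apply: (P1 k.+1 Y' Z' p' bY kY' w y Yw Zy).
move=> hZ; have := pth_lev p' kY'; rewrite hZ ltnn //.
Qed.

Lemma QP n : (forall n', (n' <= n)%N -> Qs n' /\ Ps n').
Proof.
elim: n => [|n IH] n' hn.
  have Q0 : Qs 0 by apply: Q_step => n''; rewrite ltn0.
  rewrite leqn0 in hn; rewrite (eqP hn); split => //.
  by apply: P_of_Q => n''; rewrite leqn0 => /eqP ->.
rewrite leq_eqVlt in hn; case/orP: hn => [/eqP ->|]; last by rewrite ltnS; exact: IH.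
have Qn : Qs n.+1 by apply: Q_step => n''; rewrite ltnS; exact: IH.
split => //; apply: P_of_Q => n'' h.
rewrite leq_eqVlt in h; case/orP: h => [/eqP ->//|]; rewrite ltnS => h.
by have [] := IH n'' h.
Qed.

End Chain.

Section Ext.
Variables (R : realType) (T : Type) (d : T -> T -> R).

Lemma c_tau_ge0 m de t : (0 <= c_tau d m de t)%E.
Proof. by apply: ereal_sup_ubound; left. Qed.

Lemma c_delta_ge0 m de : (0 <= c_delta d m de)%E.
Proof.
apply: le_trans (ereal_sup_ubound _); last first.
  by exists 1 => //=; exact: ltr01.
by apply: le_ereal_inf_tmp => _ [t _ <-]; exact: c_tau_ge0.
Qed.

Lemma c_m_pos m : (0 < c_m d m)%E -> exists2 de : R, 0 < de & (0 < c_delta d m de)%E.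
Proof.
move=> h; apply: contrapT => hn; move: h.
suff -> : c_m d m = 0%E by rewrite ltxx.
rewrite /c_m; apply: (lim_near_cst (@ereal_hausdorff R)).
near=> x.
have hx : 0 < x by near: x; exact: nbhs_right_gt.
apply/eqP; rewrite eq_le c_delta_ge0 andbT leNgt; apply/negP => hp.
by apply: hn; exists x.
Unshelve. all: by end_near.
Qed.


Lemma pos_below (x : \bar R) : (0 < x)%E -> exists2 c : R, 0 < c & (c%:E < x)%E.
Proof.
case: x => [x||] //= h; last by exists 1; [exact: ltr01 | exact: ltry].
rewrite lte_fin in h; exists (x / 2); first by lra.
rewrite lte_fin; lra.
Qed.

Lemma ext_cover m de : 0 < de -> (0 < c_delta d m de)%E ->
  exists c e : R, [/\ 0 < c, 0 < e & forall t, 0 < t < e -> exists UU,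
    [/\ open_covering d UU, colored m.+1 UU, ((de * t)%:E <= mesh d UU)%E,
        (mesh d UU <= t%:E)%E & (c%:E < cap d UU)%E]].
Proof.
move=> hde h; have [y [e he <-] hy] := ereal_sup_gt h.
have [c hc hcy] := pos_below hy.
exists c, e; split => // t ht.
have : (c%:E < c_tau d m de t)%E.
  apply: lt_le_trans hcy _; apply: ereal_inf_lbound; exists t => //.
move=> /ereal_sup_gt [z [->|[UU [h1 [h2 [h3 h4]]] <-]] hz].
  by move: hz; rewrite lte_fin ltNge (ltW hc).
by exists UU; split.
Qed.


Lemma cover_props UU c de t : is_metric d -> 0 < c -> 0 < de -> 0 < t ->
  ((de * t)%:E <= mesh d UU)%E -> (mesh d UU <= t%:E)%E -> (c%:E < cap d UU)%E ->
  [/\ (forall U x y, UU U -> U x -> U y -> d x y <= t),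
      (forall x, exists U, UU U /\ forall y, d x y < c * de * t -> U y),
      (forall x, exists y, c * de * t / 2 < d x y /\ d x y <= t) &
      (exists x0 : T, True)].
Proof.
move=> [dge0 [d0 [dsym dtri]]] hc hde ht h3 h4 hcap.
have ha : forall U x y, UU U -> U x -> U y -> d x y <= t.
  move=> U x y UUU Ux Uy; rewrite -lee_fin; apply: le_trans h4.
  apply: le_trans (ereal_sup_ubound _); last by right; exists U.
  by apply: ereal_sup_ubound; right; exists x, y.
case hM : (mesh d UU) h3 h4 hcap => [M| |] h3 h4 hcap; last by [].
  2: by move: h4; rewrite leNgt ltey.
rewrite lee_fin in h3; rewrite lee_fin in h4.
have Mpos : 0 < M by apply: lt_le_trans h3; exact: mulr_gt0.
have hL : ((c * de * t)%:E < L d UU)%E.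
  move: hcap; rewrite /cap hM eqe (gt_eqF Mpos) /=.
  case hLv : (L d UU) => [l| |] /=; last by rewrite lte_fin mul0r ltNge (ltW hc).
    rewrite !lte_fin ltr_pdivlMr // => h.
    apply: le_lt_trans h; rewrite -mulrA ler_pM2l //.
  by rewrite ltey.
split => //.
- move=> x.
  have : ((c * de * t)%:E < L_at d UU x)%E.
    apply: lt_le_trans hL _; apply: ereal_inf_lbound; by exists x.
  rewrite /L_at lt_min => /andP [] /ereal_sup_gt [_ [U UUU <-] hU] _.
  exists U; split => // y hy; apply: contrapT => nUy.
  have : (dist_to d x (~` U) <= (d x y)%:E)%E.
    by apply: ereal_inf_lbound; exists y.
  move=> h; have := lt_le_trans hU h; rewrite lte_fin ltNge (ltW hy) //.
- move=> x.
  have : ((c * de * t)%:E < L_at d UU x)%E.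
    apply: lt_le_trans hL _; apply: ereal_inf_lbound; by exists x.
  rewrite /L_at lt_min => /andP [] _ /ereal_sup_gt [_ [U [UUU Ux] <-] hU].
  have /ereal_sup_gt [z [->|[p [q [Up [Uq ->]]]]] hz] := hU.
    have hp : 0 < c * de * t by do 2 apply: mulr_gt0 => //.
    by exfalso; move: hz; rewrite lte_fin; lra.
  rewrite lte_fin in hz.
  have hpq : d p q <= d x p + d x q by rewrite (dsym x p); exact: dtri.
  case: (lerP (d x p) (c * de * t / 2)) => hxp.
    exists q; split; last exact: ha Ux Uq.
    lra.
  exists p; split => //; exact: ha Ux Up.
- have : (0 < mesh d UU)%E by rewrite hM lte_fin.
  move=> /ereal_sup_gt [z [->|[U UUU <-]] hz]; first by rewrite ltxx in hz.
  have /ereal_sup_gt [w [->|[p [q [Up [Uq ->]]]]] hw] := hz; first by rewrite ltxx in hw.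
  by exists p.
Qed.


Lemma extract n : is_metric d -> cdim_le d n ->
  exists lam e : R, [/\ 0 < lam, 0 < e, (exists x0 : T, True) &
  forall t, 0 < t < e -> exists F : 'I_n.+1 -> set (set T),
   [/\ (forall a U, F a U -> mopen d U),
       (forall a, pairwise_disjoint (F a)),
       (forall a U x y, F a U -> U x -> U y -> d x y <= t),
       (forall x, exists a U, F a U /\ forall y, d x y < lam * t -> U y) &
       (forall x, exists y, lam * t / 2 < d x y /\ d x y <= t)]].
Proof.
move=> hd [m [hmn hcm]].
have [de hde hcd] := c_m_pos hcm.
have [c [e [hc he Hcov]]] := ext_cover hde hcd.
exists (c * de), e; split => //; first exact: mulr_gt0.
  have ht : 0 < e / 2 < e by apply/andP; split; lra.
  have [UU [h1 h2 h3 h4 h5]] := Hcov _ ht.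
  have he2 : 0 < e / 2 by lra.
  by have [_ _ _ //] := cover_props hd hc hde he2 h3 h4 h5.
move=> t ht; have [UU [[hcv hop] [G [hG hGd]] h3 h4 h5]] := Hcov _ ht.
have tpos : 0 < t by case/andP: ht.
have [ha hb hc' _] := cover_props hd hc hde tpos h3 h4 h5.
have hUU : forall i U, G i U -> UU U by move=> i U GiU; rewrite hG; exists i.
exists (fun a U => exists i : 'I_m.+1, val i = val a /\ G i U); split.
- by move=> a U [i [_ GiU]]; apply: hop; exact: hUU GiU.
- move=> a; rewrite /pairwise_disjoint => U V [i [hi GiU]] [j [hj GjV]].
  have ij : i = j by apply: val_inj; rewrite hi hj.
  by rewrite -ij in GjV; apply: (hGd i).
- by move=> a U x y [i [_ GiU]]; apply: ha; exact: hUU GiU.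
- move=> x; have [U [UUU hU]] := hb x.
  move: UUU; rewrite hG => -[i _ GiU].
  have hmn' : (m.+1 <= n.+1)%N by [].
  by exists (widen_ord hmn' i), U; split => //; exists i.
- exact: hc'.
Qed.

End Ext.

Section Main.
Variables (R : realType) (T : Type) (d : T -> T -> R).
Hypothesis dxx : forall x, d x x = 0.
Hypothesis dsym : forall x y, d x y = d y x.
Hypothesis dtri : forall x y z, d x z <= d x y + d y z.
Variables (n : nat) (lam r mu : R) (F : nat -> 'I_n.+1 -> set (set T)).
Hypothesis hlam : 0 < lam.
Hypothesis hmu : 0 < mu.
Hypothesis hmu1 : mu <= 1.
Hypothesis hmul : 4 * mu <= lam.
Hypothesis hr : 0 < r.
Hypothesis hr14 : r <= 1/4.
Hypothesis hrmu : r < mu.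
Hypothesis HF : forall k, (0 < k)%N ->
   [/\ (forall a U, F k a U -> mopen d U),
       (forall a, pairwise_disjoint (F k a)),
       (forall a U x y, F k a U -> U x -> U y -> d x y <= r ^+ k / 2) &
       (forall x, exists a U, F k a U /\ forall y, d x y < lam * (r ^+ k / 2) -> U y)].

Definition base (s : R) (V : set T) : set T :=
  [set x | exists2 eps, s < eps & forall y, d x y < eps -> V y].

Definition Bas (a : 'I_n.+1) (k : nat) (B : set T) : Prop :=
  (0 < k)%N /\ exists2 V, F k a V & B = base (r ^+ k.+1) V.

Definition Ufin a j B : set T :=
  [set x | exists N : node T, (exists m, pth (Bas a) j m (j, B) N) /\ N.2 x].

Lemma rk_gt0 k : 0 < r ^+ k. Proof. exact: exprn_gt0. Qed.

Lemma base_sub s V x : 0 <= s -> base s V x -> V x.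
Proof. by move=> hs [eps he h]; apply: h; rewrite dxx; lra. Qed.

Lemma base_open s V : mopen d (base s V).
Proof.
move=> x [eps he h]; exists (eps - s); first by lra.
move=> y hy; exists (eps - d x y); first by lra.
move=> z hz; apply: h; have := dtri x y z; lra.
Qed.

Lemma Bas_diam a k B x y : Bas a k B -> B x -> B y -> d x y <= r ^+ k / 2.
Proof.
move=> [hk [V FV ->]] Bx By; have [_ _ h _] := HF hk.
have hs : 0 <= r ^+ k.+1 by exact: ltW (rk_gt0 _).
by apply: (h a V) => //; [exact: base_sub hs Bx | exact: base_sub hs By].
Qed.

Lemma Bas_gap a k B B' x y : Bas a k B -> Bas a k B' -> B <> B' -> B x -> B' y ->
  r ^+ k.+1 < d x y.
Proof.
move=> [hk [V FV ->]] [_ [V' FV' ->]] ne [eps he h] By.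
have [_ hd _ _] := HF hk.
have nVV : V <> V' by move=> e; apply: ne; rewrite e.
have := hd a V V' FV FV' nVV => hI.
have hs : 0 <= r ^+ k.+1 by exact: ltW (rk_gt0 _).
have V'y := base_sub hs By.
apply: lt_le_trans he _; rewrite leNgt; apply/negP => hxy.
have Vy := h y hxy.
have : (V `&` V') y by split.
by rewrite hI.
Qed.

Lemma r14' : r <= 1/4. Proof. by []. Qed.

Lemma chainP a j X Y m : pth (Bas a) j m X Y -> Bas a X.1 X.2 -> (j <= X.1)%N ->
  forall x y, X.2 x -> Y.2 y -> d x y <= r ^+ j.
Proof.
move=> p bX hj.
have hr0 : 0 <= r by exact: ltW.
have [_ P] := QP dxx dsym dtri hr0 r14' (@Bas_diam a) (@Bas_gap a) (leqnn m).
exact: P p bX hj.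
Qed.

Lemma chainQ a j X Y m : pth (Bas a) j m X Y -> Bas a X.1 X.2 -> X.1 = j ->
  Y.1 = j -> Y.2 = X.2.
Proof.
move=> p bX hj.
have hr0 : 0 <= r by exact: ltW.
have [Q _] := QP dxx dsym dtri hr0 r14' (@Bas_diam a) (@Bas_gap a) (leqnn m).
by have [] := Q j X Y p bX hj.
Qed.


Lemma ball_base j V x : (0 < j)%N -> (forall y, d x y < lam * (r ^+ j / 2) -> V y) ->
  forall y, d x y < mu * r ^+ j -> base (r ^+ j.+1) V y.
Proof.
move=> hj hV y hy; exists (lam * (r ^+ j / 2) - d x y).
  have hp := rk_gt0 j; rewrite exprS.
  have h1 : r * r ^+ j < mu * r ^+ j by rewrite ltr_pM2r.
  have h2 : 4 * mu * r ^+ j <= lam * r ^+ j by rewrite ler_pM2r.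
  have hm := hmul; lra.
move=> z hz; apply: hV; have := dtri x y z; lra.
Qed.

Lemma Ufin_base a j B x : B x -> Ufin a j B x.
Proof. by move=> Bx; exists (j, B); split => //; exists 0%N; exact: pth0. Qed.

Lemma Bas_open a k B : Bas a k B -> mopen d B.
Proof. by move=> [_ [V _ ->]]; exact: base_open. Qed.

Lemma Ufin_open a j B : Bas a j B -> mopen d (Ufin a j B).
Proof.
move=> bB x [N [[m p] Nx]].
have bN := pth_bas p bB.
have [eps he h] := Bas_open bN Nx.
exists eps => // y hy; exists N; split; [by exists m | exact: h].
Qed.

Lemma Ufin_diam a j B x y : Bas a j B -> Ufin a j B x -> Ufin a j B y -> d x y <= r ^+ j.
Proof.
move=> bB [N1 [[m1 p1] N1x]] [N2 [[m2 p2] N2y]].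
have p := pth_cat (pth_rev p1) p2.
apply: (chainP p) => //; first exact: pth_bas p1 bB.
exact: pth_lev p1 (leqnn j).
Qed.

Lemma Ufin_same a j B1 B2 z : Bas a j B1 -> Bas a j B2 ->
  Ufin a j B1 z -> Ufin a j B2 z -> B1 = B2.
Proof.
move=> b1 b2 [N1 [[m1 p1] N1z]] [N2 [[m2 p2] N2z]].
have s : Step (Bas a) j N1 N2.
  split; [exact: pth_lev p1 (leqnn j) | exact: pth_lev p2 (leqnn j)
         | exact: pth_bas p1 b1 | exact: pth_bas p2 b2 | by exists z].
have p := pth_cat p1 (pthS s (pth_rev p2)).
by have := chainQ p b1 erefl erefl.
Qed.

Lemma Ufin_nest a j i B1 B2 z : (j <= i)%N -> Bas a j B1 -> Bas a i B2 ->
  Ufin a j B1 z -> Ufin a i B2 z -> Ufin a i B2 `<=` Ufin a j B1.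
Proof.
move=> ji b1 b2 [N1 [[m1 p1] N1z]] [N2 [[m2 p2] N2z]] w [N3 [[m3 p3] N3w]].
have s : Step (Bas a) j N1 N2.
  split; [exact: pth_lev p1 (leqnn j) | apply: leq_trans ji _; exact: pth_lev p2 (leqnn i)
         | exact: pth_bas p1 b1 | exact: pth_bas p2 b2 | by exists z].
have p := pth_cat (pth_cat p1 (pthS s (pth_mono ji (pth_rev p2)))) (pth_mono ji p3).
by exists N3; split => //; eexists; exact: p.
Qed.


Definition UUf j a : set (set T) :=
  [set U | exists2 V, F j a V & U = Ufin a j (base (r ^+ j.+1) V)].

Lemma key_ball j x : (0 < j)%N -> exists a V, [/\ F j a V, Bas a j (base (r ^+ j.+1) V) &
  forall y, d x y < mu * r ^+ j -> Ufin a j (base (r ^+ j.+1) V) y].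
Proof.
move=> hj; have [_ _ _ hL] := HF hj; have [a [V [FV hV]]] := hL x.
exists a, V; split => //; first by split => //; exists V.
by move=> y hy; apply: Ufin_base; exact: ball_base hV _ hy.
Qed.

Lemma UUf_Bas j a U : (0 < j)%N -> UUf j a U ->
  exists B, [/\ Bas a j B & U = Ufin a j B].
Proof. by move=> hj [V FV ->]; exists (base (r ^+ j.+1) V); split => //; split => //; exists V. Qed.

Lemma UUf_diam j a U x y : (0 < j)%N -> UUf j a U -> U x -> U y -> d x y <= r ^+ j.
Proof. by move=> hj /(UUf_Bas hj) [B [bB ->]]; exact: Ufin_diam. Qed.

Lemma UUf_open j a U : (0 < j)%N -> UUf j a U -> mopen d U.
Proof. by move=> hj /(UUf_Bas hj) [B [bB ->]]; exact: Ufin_open. Qed.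

Lemma UUf_inter j i a U V z : (0 < j)%N -> (0 < i)%N -> (j <= i)%N -> UUf j a U -> UUf i a V ->
  U z -> V z -> V `<=` U.
Proof.
move=> hj hi ji /(UUf_Bas hj) [B1 [b1 ->]] /(UUf_Bas hi) [B2 [b2 ->]] h1 h2.
exact: Ufin_nest ji b1 b2 h1 h2.
Qed.

Lemma UUf_same j a U V z : (0 < j)%N -> UUf j a U -> UUf j a V -> U z -> V z -> U = V.
Proof.
move=> hj /(UUf_Bas hj) [B1 [b1 ->]] /(UUf_Bas hj) [B2 [b2 ->]] h1 h2.
by rewrite (Ufin_same b1 b2 h1 h2).
Qed.


Variable x0 : T.
Hypothesis HP : forall j, (0 < j)%N -> forall x, exists y,
  lam * (mu * r ^+ j / 2) / 2 < d x y /\ d x y <= mu * r ^+ j / 2.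

Lemma fat j x : (0 < j)%N -> exists U, [/\ (\bigcup_a UUf j a) U, U x,
  (forall y, d x y < mu * r ^+ j -> U y) & exists2 y, U y & mu * mu * r ^+ j <= d x y].
Proof.
move=> hj; have [a [V [FV bV hU]]] := key_ball x hj.
exists (Ufin a j (base (r ^+ j.+1) V)); split => //.
- by exists a => //; exists V.
- by apply: hU; rewrite dxx; apply: mulr_gt0 => //; exact: rk_gt0.
have [y [h1 h2]] := HP hj x.
have hp := rk_gt0 j.
have hmp : 0 < mu * r ^+ j by exact: mulr_gt0.
exists y.
  apply: hU; lra.
have : mu * mu * r ^+ j <= lam * mu * r ^+ j / 4.
  have : mu * (mu * r ^+ j) <= (lam / 4) * (mu * r ^+ j).
    rewrite ler_pM2r //; have := hmul; lra.
  have e1 : mu * mu * r ^+ j = mu * (mu * r ^+ j) by ring.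
  have e2 : lam * mu * r ^+ j / 4 = lam / 4 * (mu * r ^+ j) by ring.
  by rewrite e1 e2.
lra.
Qed.

Lemma diam_le U (b : R) : 0 <= b -> (forall x y, U x -> U y -> d x y <= b) -> (diam d U <= b%:E)%E.
Proof.
move=> hb h; apply: ge_ereal_sup => _ [->|[x [y [Ux [Uy ->]]]]]; first by rewrite lee_fin.
by rewrite lee_fin; exact: h.
Qed.

Lemma diam_ge U x y : U x -> U y -> ((d x y)%:E <= diam d U)%E.
Proof. by move=> Ux Uy; apply: ereal_sup_ubound; right; exists x, y. Qed.

Lemma construction :
    (forall j : nat, (0 < j)%N ->
       open_covering d (\bigcup_a UUf j a) /\ forall a, pairwise_disjoint (UUf j a)) /\
    (forall j : nat, (0 < j)%N ->
       (((mu * mu) * r ^+ j)%:E <= mesh d (\bigcup_a UUf j a))%E /\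
       (mesh d (\bigcup_a UUf j a) <= (r ^+ j)%:E)%E /\
       ((mu * mu)%:E * mesh d (\bigcup_a UUf j a) <= L d (\bigcup_a UUf j a))%E) /\
    (forall i j : nat, (0 < j)%N -> (j < i)%N ->
       inscribed_in (\bigcup_a UUf i a) (\bigcup_a UUf j a)) /\
    (forall a : 'I_n.+1, separated_family (\bigcup_(j in [set j : nat | (0 < j)%N]) UUf j a)).
Proof.
have mu2 : 0 < mu * mu by exact: mulr_gt0.
split; [|split; [|split]].
- move=> j hj; split; first split.
  + move=> x; have [U [hU Ux _ _]] := fat x hj; by exists U.
  + by move=> U [a _ hU]; exact: UUf_open hU.
  + move=> a; rewrite /pairwise_disjoint => U V hU hV ne.
    rewrite -subset0 => z [Uz Vz]; apply: ne; exact: UUf_same hU hV Uz Vz.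
- move=> j hj.
  have hp := rk_gt0 j.
  have hmesh : (mesh d (\bigcup_a UUf j a) <= (r ^+ j)%:E)%E.
    apply: ge_ereal_sup => _ [->|[U [a _ hU] <-]]; first by rewrite lee_fin ltW.
    apply: diam_le; first exact: ltW.
    by move=> x y; exact: UUf_diam hU.
  split; [|split] => //.
    have [U [hU Ux _ [y Uy hy]]] := fat x0 hj.
    apply: le_trans (_ : ((mu * mu * r ^+ j)%:E <= (d x0 y)%:E)%E) _; first by rewrite lee_fin.
    apply: le_trans (diam_ge Ux Uy) _.
    by apply: ereal_sup_ubound; right; exists U.
  have hmm : mu * mu * r ^+ j <= mu * r ^+ j.
    have hmp : 0 < mu * r ^+ j by exact: mulr_gt0.
    have : mu * (mu * r ^+ j) <= 1 * (mu * r ^+ j) by rewrite ler_pM2r.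
    by rewrite mul1r mulrA.
  apply: le_trans (_ : _ <= (mu * mu)%:E * (r ^+ j)%:E)%E _.
    by apply: lee_wpmul2l => //; rewrite lee_fin ltW.
  rewrite -EFinM; apply: le_ereal_inf_tmp => _ [x _ <-].
  have [U [hU Ux hball [y Uy hy]]] := fat x hj.
  rewrite /L_at le_min; apply/andP; split.
    apply: le_trans (_ : _ <= dist_to d x (~` U))%E _.
      apply: le_ereal_inf_tmp => _ [z nUz <-]; rewrite lee_fin.
      case: (ltP (d x z) (mu * r ^+ j)) => h; first by exfalso; apply: nUz; exact: hball.
      exact: le_trans hmm h.
    by apply: ereal_sup_ubound; exists U.
  apply: le_trans (_ : _ <= (d x y)%:E)%E _; first by rewrite lee_fin.
  apply: le_trans (diam_ge Ux Uy) _.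
  by apply: ereal_sup_ubound; exists U.
- move=> i j hj ji U' [a _ hU'].
  have hi : (0 < i)%N by apply: leq_ltn_trans ji.
  case: (pselect (exists x, U' x)) => [[x U'x]|nx]; last first.
    have [U [hU _ _ _]] := fat x0 hj; exists U => // y U'y; exfalso; apply: nx; by exists y.
  have [U [hU Ux hball _]] := fat x hj; exists U => // y U'y; apply: hball.
  have h1 := UUf_diam hi hU' U'x U'y.
  have hr0 : 0 <= r by exact: ltW.
  have hr1 : r <= 1 by have := hr14; lra.
  have h2 : r ^+ i <= r ^+ j.+1 by exact: (ler_wiXn2l hr0 hr1 ji).
  have hp := rk_gt0 j.
  have h3 : r * r ^+ j < mu * r ^+ j by rewrite ltr_pM2r.
  rewrite exprS in h2; lra.
- move=> a; rewrite /separated_family => U V [j hj hU] [i hi hV] ne.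
  case: (pselect (exists z, U z /\ V z)) => [[z [Uz Vz]]|nz]; last first.
    by left; rewrite -subset0 => z [Uz Vz]; apply: nz; exists z.
  right; case: (leqP j i) => ji.
    by right; exact: UUf_inter hj hi ji hU hV Uz Vz.
  by left; exact: UUf_inter hi hj (ltnW ji) hV hU Vz Uz.
Qed.

End Main.


Theorem proposition4p4 (R : realType) (T : Type) (d : T -> T -> R) (n : nat) :
  is_metric d -> cdim_le d n ->
  exists c0 delta r0 : R, 0 < c0 /\ 0 < delta /\ 0 < r0 /\
  forall r : R, 0 < r < r0 ->
  exists UU : nat -> 'I_n.+1 -> set (set T),
    (* (i) each U_j (j >= 1) is an open covering, colored by A = 'I_(n+1) *)
    (forall j : nat, (0 < j)%N ->
       open_covering d (\bigcup_a UU j a) /\ forall a, pairwise_disjoint (UU j a)) /\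
    (* (ii) *)
    (forall j : nat, (0 < j)%N ->
       ((delta * r ^+ j)%:E <= mesh d (\bigcup_a UU j a))%E /\
       (mesh d (\bigcup_a UU j a) <= (r ^+ j)%:E)%E /\
       (c0%:E * mesh d (\bigcup_a UU j a) <= L d (\bigcup_a UU j a))%E) /\
    (* (iii) *)
    (forall i j : nat, (0 < j)%N -> (j < i)%N ->
       inscribed_in (\bigcup_a UU i a) (\bigcup_a UU j a)) /\
    (* (iv) *)
    (forall a : 'I_n.+1, separated_family (\bigcup_(j in [set j : nat | (0 < j)%N]) UU j a)).
Proof.
move=> hd hc.
have [lam [e [hlam he [x0 _] Hcov]]] := extract hd hc.
have [dge0 [d0 [dsym dtri]]] := hd.
have dxx : forall x, d x x = 0 by move=> x; apply/d0.
pose mu := Num.min (lam / 4) 1.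
have hmu1 : mu <= 1 by rewrite /mu ge_min lexx orbT.
have hmu4 : mu <= lam / 4 by rewrite /mu ge_min lexx.
have hmu : 0 < mu by rewrite /mu lt_min ltr01 andbT; lra.
have hmul : 4 * mu <= lam by lra.
pose r0 := Num.min (Num.min (1 / 4) mu) e.
have mu2 : 0 < mu * mu by exact: mulr_gt0.
exists (mu * mu), (mu * mu), r0; split => //; split => //; split.
  by rewrite /r0 !lt_min; apply/andP; split; [apply/andP; split|]; lra.
move=> r /andP [hr hr0].
move: hr0; rewrite /r0 lt_min => /andP [hr0' hre].
have hr14 : r < 1 / 4 by apply: lt_le_trans hr0' _; rewrite ge_min lexx.
have hrmu : r < mu by apply: lt_le_trans hr0' _; rewrite ge_min lexx orbT.
have hr14' : r <= 1 / 4 by exact: ltW.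
have hr1 : r <= 1 by lra.
have hFex : forall k : nat, exists F : 'I_n.+1 -> set (set T), (0 < k)%N ->
   [/\ (forall a U, F a U -> mopen d U),
       (forall a, pairwise_disjoint (F a)),
       (forall a U x y, F a U -> U x -> U y -> d x y <= r ^+ k / 2) &
       (forall x, exists a U, F a U /\ forall y, d x y < lam * (r ^+ k / 2) -> U y)].
  case=> [|k]; first by exists (fun _ => set0).
  have hp : 0 < r ^+ k.+1 by exact: exprn_gt0.
  have hle : r ^+ k.+1 <= r by rewrite -{2}(expr1 r); apply: ler_wiXn2l => //; exact: ltW.
  have ht : 0 < r ^+ k.+1 / 2 < e by apply/andP; split; lra.
  have [F [h1 h2 h3 h4 _]] := Hcov _ ht.
  by exists F => _; split.
have [F HF] := choice hFex.
have HP : forall j, (0 < j)%N -> forall x, exists y,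
  lam * (mu * r ^+ j / 2) / 2 < d x y /\ d x y <= mu * r ^+ j / 2.
  move=> [|j] // _ x.
  have hp : 0 < r ^+ j.+1 by exact: exprn_gt0.
  have hle : r ^+ j.+1 <= r by rewrite -{2}(expr1 r); apply: ler_wiXn2l => //; exact: ltW.
  have hmp : mu * r ^+ j.+1 <= r ^+ j.+1.
    by rewrite -{2}(mul1r (r ^+ j.+1)) ler_pM2r.
  have hmp' : 0 < mu * r ^+ j.+1 by exact: mulr_gt0.
  have ht : 0 < mu * r ^+ j.+1 / 2 < e by apply/andP; split; lra.
  have [F' [_ _ _ _ h5]] := Hcov _ ht.
  exact: h5.
exists (UUf d r F).
have [H1 [H2 [H3 H4]]] := construction dxx dsym dtri hmu hmu1 hmul hr hr14' hrmu HF x0 HP.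
split; first exact: H1.
split; first exact: H2.
split; first exact: H3.
exact: H4.
Qed.
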